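(* Let $\mathbf X_1,\dots,\mathbf X_n$ be i.i.d. copies of $\mathbf X\in\mathbb R^d$ with $K_{\mathbf X}=\sup_j\|X_j\|_{\psi_2}<\infty$, $\boldsymbol\Sigma_{\mathbf X}=\mathbb E\mathbf X\mathbf X^T$, $\boldsymbol\Sigma_n=n^{-1}\sum_i\mathbf X_i\mathbf X_i^T$, and let $\bar c$ be the universal constant for which $\mathbb P(\|\boldsymbol\Sigma_n-\boldsymbol\Sigma_{\mathbf X}\|_{\max}>4A_XK_{\mathbf X}^2\sqrt{\log d/n})\le2d^{2-\bar cA_X^2}$ for every constant $A_X>0$ with $A_X\sqrt{\log d/n}\le1$. Fix such an $A_X$ and $0<\kappa<1$. Assume $\lambda_{\min}(\boldsymbol\Sigma_{\mathbf X})>\delta>0$, $s_{\mathbf v}\sqrt{\log d/n}\le(1-\kappa)\frac{\lambda_{\min}(\boldsymbol\Sigma_{\mathbf X})}{(1+1)^2\,4A_XK_{\mathbf X}^2}$ and $\lambda'\ge\|\mathbf v^*\|_14A_XK_{\mathbf X}^2\sqrt{\log d/n}$. Then with probability at least $1-2d^{2-\bar cA_X^2}$, $\|\hat{\mathbf v}-\mathbf v^*\|_1\le\frac{8\lambda's_{\mathbf v}}{\mathrm{RE}_\kappa(s_{\mathbf v},1)}$; additionally $\|\hat{\mathbf v}_{S_{\mathbf v}^c}-\mathbf v^*_{S_{\mathbf v}^c}\|_1\le\|\hat{\mathbf v}_{S_{\mathbf v}}-\mathbf v^*_{S_{\mathbf v}}\|_1$.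
   Context: $\mathbf v^*=\boldsymbol\Sigma_{\mathbf X}^{-1}\mathbf e_1^T$, $S_{\mathbf v}=\mathrm{supp}(\mathbf v^* )$, $s_{\mathbf v}=|S_{\mathbf v}|$. $\hat{\mathbf v}=\arg\min\|\mathbf v\|_1$ subject to $\|\mathbf v^T\boldsymbol\Sigma_n-\mathbf e_1\|_\infty\le\lambda'$, with $\mathbf e_1=(1,0,\dots,0)$. For a vector $\mathbf u$ and index set $S$, $\mathbf u_S$ is the subvector on $S$. Restricted eigenvalue: for symmetric positive semidefinite $\mathbf M\in\mathbb R^{d\times d}$, $\mathrm{RE}_{\mathbf M}(s,\xi)=\min_{|S|\le s}\min\{\mathbf u^T\mathbf M\mathbf u/\|\mathbf u_S\|_2^2:\mathbf u\ne0,\|\mathbf u_{S^c}\|_1\le\xi\|\mathbf u_S\|_1\}$, and $\mathrm{RE}_\kappa(s,\xi)=\kappa\,\mathrm{RE}_{\boldsymbol\Sigma_{\mathbf X}}(s,\xi)$. $\|X\|_{\psi_2}=\sup_{p\ge1}p^{-1/2}(\mathbb E|X|^p)^{1/p}$. *)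

(* Defs.v *)
From HB Require Import structures.
From mathcomp Require Import all_boot all_order all_algebra.
From mathcomp Require Import all_classical all_reals all_analysis.
Set Implicit Arguments.
Unset Strict Implicit.
Unset Printing Implicit Defensive.
Import Order.TTheory GRing.Theory Num.Theory.
Import numFieldNormedType.Exports.
Local Open Scope classical_set_scope.
Local Open Scope ring_scope.

Section LinAlg.
Context {R : realType}.

Definition l1norm {d} (v : 'cV[R]_d) : R := \sum_i `|v i 0|.
Definition l1norm_on {d} (S : {set 'I_d}) (v : 'cV[R]_d) : R :=
  \sum_(i in S) `|v i 0|.
Definition l2sq_on {d} (S : {set 'I_d}) (v : 'cV[R]_d) : R :=
  \sum_(i in S) (v i 0) ^+ 2.
Definition maxnorm {m k} (A : 'M[R]_(m, k)) : R :=
  \big[Num.max/0]_i \big[Num.max/0]_j `|A i j|.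
Definition supnorm_row {d} (v : 'rV[R]_d) : R := \big[Num.max/0]_j `|v 0 j|.
Definition e1 d : 'rV[R]_d := \row_j (nat_of_ord j == 0%N)%:R.
Definition lambda_min {d} (M : 'M[R]_d) : R := inf [set a : R | eigenvalue M a].
Definition supp {d} (v : 'cV[R]_d) : {set 'I_d} := [set i | v i 0 != 0].
Definition vstar {d} (Sigma : 'M[R]_d) : 'cV[R]_d := invmx Sigma *m (e1 d)^T.

(* restricted eigenvalue RE_M(s, xi) (the min is attained; written as inf) *)
Definition RE {d} (M : 'M[R]_d) (s : nat) (xi : R) : R :=
  inf [set r : R | exists (S : {set 'I_d}) (u : 'cV[R]_d),
        [/\ (#|S| <= s)%N, u != 0, l1norm_on (~: S) u <= xi * l1norm_on S u
          & r = (u^T *m M *m u) 0 0 / l2sq_on S u]].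
Definition RE_kappa {d} (kappa : R) (Sigma : 'M[R]_d) (s : nat) (xi : R) : R :=
  kappa * RE Sigma s xi.

Definition feasible {d} (Sn : 'M[R]_d) (lam : R) (v : 'cV[R]_d) : Prop :=
  supnorm_row (v^T *m Sn - e1 d) <= lam.
Definition is_minimizer {d} (Sn : 'M[R]_d) (lam : R) (v : 'cV[R]_d) : Prop :=
  feasible Sn lam v /\ forall u, feasible Sn lam u -> l1norm v <= l1norm u.

End LinAlg.

Section Prob.
Context {R : realType} {dT : measure_display} {T : measurableType dT}.
Variable P : probability T R.

Definition psi2norm (Y : T -> R) : \bar R :=
  ereal_sup [set ((powR p (- 2^-1))%:E *
                 poweR (\int[P]_w ((powR `|Y w| p)%:E)) p^-1)%E
            | p in [set p : R | 1 <= p]].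

Definition Kx {d} (X : T -> 'cV[R]_d) : \bar R :=
  ereal_sup (range (fun j : 'I_d => psi2norm (fun w => X w j 0))).

Definition Sigma_X {d} (X : T -> 'cV[R]_d) : 'M[R]_d :=
  \matrix_(j, k) fine (\int[P]_w ((X w j 0 * X w k 0)%:E)).

Definition Sigma_n {n d} (Xs : 'I_n -> T -> 'cV[R]_d) (w : T) : 'M[R]_d :=
  n%:R^-1 *: \sum_i (Xs i w *m (Xs i w)^T).

(* X_1..X_n are i.i.d. copies of X: measurable coordinates, same law as X and
   mutually independent (laws/independence tested on measurable boxes, which
   form a pi-system generating the Borel sigma-algebra of R^d). *)
Definition iid_copies {n d} (Xs : 'I_n -> T -> 'cV[R]_d) (X : T -> 'cV[R]_d) : Prop :=
  [/\ (forall i j, measurable_fun setT (fun w => Xs i w j 0)),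
      (forall B : 'I_d -> set R, (forall j, measurable (B j)) -> forall i,
         P [set w | forall j, B j (Xs i w j 0)] = P [set w | forall j, B j (X w j 0)])
    & (forall B : 'I_n -> 'I_d -> set R, (forall i j, measurable (B i j)) ->
         P [set w | forall i j, B i j (Xs i w j 0)]
         = (\prod_i P [set w | forall j, B i j (Xs i w j ord0)])%E)].

End Prob.

(* Main.v *)
Require Import Defs.
From HB Require Import structures.
From mathcomp Require Import all_boot all_order all_algebra.
From mathcomp Require Import all_classical all_reals all_analysis.
From mathcomp Require Import ring lra.
Import Order.TTheory GRing.Theory Num.Theory.
Import numFieldNormedType.Exports.
Local Open Scope classical_set_scope.
Local Open Scope ring_scope.
Set Implicit Arguments.
Unset Strict Implicit.
Unset Printing Implicit Defensive.

Section LA.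
Context {R : realType}.

Definition qf {d} (M : 'M[R]_d) (u : 'cV[R]_d) : R := (u^T *m M *m u) 0 0.
Definition sq {d} (u : 'cV[R]_d) : R := \sum_i (u i 0) ^+ 2.

Lemma qfE d (M : 'M[R]_d) u :
  qf M u = \sum_j \sum_i u i 0 * M i j * u j 0.
Proof.
rewrite /qf mxE; apply: eq_bigr => j _; rewrite mxE big_distrl /=.
by apply: eq_bigr => i _; rewrite !mxE.
Qed.

Lemma sq_ge0 d (u : 'cV[R]_d) : 0 <= sq u.
Proof. by apply: sumr_ge0 => i _; exact: sqr_ge0. Qed.

Lemma sq_term d (u : 'cV[R]_d) i : (u i 0) ^+ 2 <= sq u.
Proof.
rewrite /sq (bigD1 i) //= lerDl; apply: sumr_ge0 => j _; exact: sqr_ge0.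
Qed.

Lemma sq_gt0 d (u : 'cV[R]_d) : u != 0 -> 0 < sq u.
Proof.
move=> u0; have [i ui] : exists i, u i 0 != 0.
  apply/existsP; apply: contraR u0 => /existsPn H; apply/eqP/matrixP => i j.
  by rewrite (ord1 j) mxE; apply/eqP; move: (H i); rewrite negbK.
have H2 : 0 < u i 0 ^+ 2 by rewrite exprn_even_gt0.
exact: lt_le_trans H2 (sq_term u i).
Qed.


Definition KM {d} (M : 'M[R]_d) : R := \sum_j \sum_i `|M i j|.

Lemma KM_ge0 d (M : 'M[R]_d) : 0 <= KM M.
Proof. by apply: sumr_ge0 => j _; apply: sumr_ge0 => i _. Qed.

Lemma Lq d (M : 'M[R]_d) u : `|qf M u| <= KM M * sq u.
Proof.
rewrite qfE /KM mulr_suml; apply: (le_trans (ler_norm_sum _ _ _)).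
apply: ler_sum => j _; rewrite mulr_suml.
apply: (le_trans (ler_norm_sum _ _ _)); apply: ler_sum => i _.
rewrite !normrM; have hi := sq_term u i; have hj := sq_term u j.
have n1 : 0 <= `|M i j| by [].
have a1 : `|u i 0| ^+ 2 = u i 0 ^+ 2 by rewrite real_normK ?num_real.
have a2 : `|u j 0| ^+ 2 = u j 0 ^+ 2 by rewrite real_normK ?num_real.
have : `|u i 0| * `|u j 0| <= sq u.
  have := sqr_ge0 (`|u i 0| - `|u j 0|). nra.
move=> h.
have -> : `|u i 0| * `|M i j| * `|u j 0| = `|M i j| * (`|u i 0| * `|u j 0|) by ring.
by apply: ler_wpM2l.
Qed.

Lemma disc (a b c : R) : 0 <= c -> (forall t, 0 <= a - 2 * t * b + t ^+ 2 * c) ->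
  b ^+ 2 <= a * c.
Proof.
move=> c0 H; have [cp|] := ltP 0 c.
  have := H (b / c); set t := b / c => h.
  have tc : t * c = b by rewrite /t mulfVK // gt_eqF.
  have : 0 <= c * (a - 2 * t * b + t ^+ 2 * c) by apply: mulr_ge0 => //; exact: ltW.
  have -> : c * (a - 2 * t * b + t ^+ 2 * c) = a * c - b ^+ 2.
    by rewrite -tc; ring.
  by rewrite subr_ge0.
move=> c0'; have c00 : c = 0 by apply/eqP; rewrite eq_le c0' c0.
rewrite c00 mulr0; have [b0|b0] := eqVneq b 0; first by rewrite b0 expr0n.
have := H ((a + 1) / (2 * b)); rewrite c00 mulr0 addr0.
have -> : 2 * ((a + 1) / (2 * b)) * b = a + 1.
  by field.
move=> h; exfalso; lra.
Qed.

Lemma CS (I : finType) (P : pred I) (a b : I -> R) :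
  (\sum_(i | P i) a i * b i) ^+ 2 <=
  (\sum_(i | P i) a i ^+ 2) * (\sum_(i | P i) b i ^+ 2).
Proof.
apply: disc; first by apply: sumr_ge0 => i _; exact: sqr_ge0.
move=> t.
have -> : \sum_(i | P i) a i ^+ 2 - 2 * t * (\sum_(i | P i) a i * b i)
   + t ^+ 2 * (\sum_(i | P i) b i ^+ 2) = \sum_(i | P i) (a i - t * b i) ^+ 2.
  rewrite !mulr_sumr -sumrN -!big_split /=; apply: eq_bigr => i _; ring.
by apply: sumr_ge0 => i _; exact: sqr_ge0.
Qed.


Lemma mxBE m n (A B : 'M[R]_(m, n)) i j : (A - B) i j = A i j - B i j.
Proof. by rewrite !mxE. Qed.
Lemma mxDE m n (A B : 'M[R]_(m, n)) i j : (A + B) i j = A i j + B i j.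
Proof. by rewrite !mxE. Qed.
Lemma mxZE m n (A : 'M[R]_(m, n)) k i j : (k *: A) i j = k * A i j.
Proof. by rewrite !mxE. Qed.

Definition bl {d} (M : 'M[R]_d) (w v : 'cV[R]_d) : R := (w^T *m M *m v) 0 0.

Lemma qf_sub d (M : 'M[R]_d) (v w : 'cV[R]_d) (t : R) :
  qf M (v - t *: w) = qf M v - t * bl M w v - t * bl M v w + t ^+ 2 * qf M w.
Proof.
rewrite /qf /bl.
have -> : (v - t *: w)^T = v^T - t *: w^T by apply/matrixP=> i j; rewrite !mxE.
rewrite !mulmxBl !mulmxBr -!scalemxAl -!scalemxAr.
rewrite !mxE; ring.
Qed.

Lemma bl_sym d (M : 'M[R]_d) (v w : 'cV[R]_d) : M^T = M -> bl M v w = bl M w v.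
Proof.
move=> sM; rewrite /bl.
have -> : (v^T *m M *m w) 0 0 = ((v^T *m M *m w)^T) 0 0 by rewrite [X in _ = X]mxE.
by rewrite !trmx_mul trmxK sM mulmxA.
Qed.

Lemma psdCS d (B : 'M[R]_d) (v w : 'cV[R]_d) : B^T = B ->
  (forall u, 0 <= qf B u) -> bl B w v ^+ 2 <= qf B w * qf B v.
Proof.
move=> sB pB; rewrite mulrC; apply: disc => // t.
have := pB (v - t *: w); rewrite qf_sub (bl_sym v w sB).
by have -> : qf B v - t * bl B w v - t * bl B w v + t ^+ 2 * qf B w =
  qf B v - 2 * t * bl B w v + t ^+ 2 * qf B w by ring.
Qed.

Lemma qf_scale d (M : 'M[R]_d) (u : 'cV[R]_d) k : qf M (k *: u) = k ^+ 2 * qf M u.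
Proof.
rewrite /qf.
have -> : (k *: u)^T = k *: u^T by apply/matrixP=> i j; rewrite !mxE.
by rewrite -!scalemxAl -!scalemxAr !mxE; ring.
Qed.

Lemma sq_scale d (u : 'cV[R]_d) k : sq (k *: u) = k ^+ 2 * sq u.
Proof. by rewrite /sq mulr_sumr; apply: eq_bigr => i _; rewrite mxE; ring. Qed.

Lemma sqE d (u : 'cV[R]_d) : (u^T *m u) 0 0 = sq u.
Proof. by rewrite mxE; apply: eq_bigr => i _; rewrite mxE expr2. Qed.

Lemma qf_shift d (M : 'M[R]_d) (u : 'cV[R]_d) c : qf (M - c%:M) u = qf M u - c * sq u.
Proof.
rewrite /qf mulmxBr mulmxBl mul_mx_scalar -scalemxAl mxBE mxZE.
by rewrite sqE.
Qed.


Lemma qf0 d (M : 'M[R]_d) : qf M 0 = 0.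
Proof. by rewrite -(scale0r (0 : 'cV[R]_d)) qf_scale expr0n /= mul0r. Qed.

Lemma sq0 d : sq (0 : 'cV[R]_d) = 0.
Proof. by rewrite -(scale0r (0 : 'cV[R]_d)) sq_scale expr0n /= mul0r. Qed.

Lemma lmin_bound d (M : 'M[R]_d) : (0 < d)%N -> M^T = M ->
  forall u, lambda_min M * sq u <= qf M u.
Proof.
move=> d0 sM.
pose Q := [set r | exists u : 'cV[R]_d, sq u = 1 /\ r = qf M u].
pose c := inf Q.
pose i0 := Ordinal d0.
pose e : 'cV[R]_d := \col_i (i == i0)%:R.
have se : sq e = 1.
  rewrite /sq (bigD1 i0) //= big1 ?addr0; first by rewrite mxE eqxx expr1n.
  by move=> i /negbTE hi; rewrite mxE hi expr0n.
have hQ0 : Q !=set0 by exists (qf M e); exists e.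
have hQlb : has_lbound Q.
  exists (- KM M) => _ [u [su ->]].
  have := Lq M u; rewrite su mulr1 => /ler_normlP [h1 _].
  by rewrite lerNl.
have hcq : forall u, c * sq u <= qf M u.
  move=> u; have [->|u0] := eqVneq u 0; first by rewrite qf0 sq0 mulr0.
  have N0 := sq_gt0 u0.
  pose k := (Num.sqrt (sq u))^-1.
  have k2 : k ^+ 2 = (sq u)^-1 by rewrite /k exprVn sqr_sqrtr // ltW.
  have Qk : Q (qf M (k *: u)) by exists (k *: u); rewrite sq_scale k2 mulVf // gt_eqF.
  have := ge_inf hQlb Qk; rewrite -/c qf_scale k2 => h.
  by rewrite -(ler_pdivlMr _ _ N0) mulrC.
pose B := M - c%:M.
have sB : B^T = B by rewrite /B linearB /= tr_scalar_mx sM.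
have pB : forall u, 0 <= qf B u.
  by move=> u; rewrite /B qf_shift subr_ge0; exact: hcq.
have hceig : eigenvalue M c.
  apply: contraT => nE.
  have uB : B \in unitmx.
    by rewrite -row_free_unit -kermx_eq0; move: nE; rewrite /eigenvalue negbK.
  pose Ni := invmx B.
  pose K1 := KM (Ni^T *m Ni).
  pose K2 := KM B.
  have K10 : 0 <= K1 by exact: KM_ge0.
  have K20 : 0 <= K2 by exact: KM_ge0.
  pose eps := ((1 + K1) * (1 + K2))^-1.
  have eps0 : 0 < eps by rewrite invr_gt0 mulr_gt0 // ltr_pwDl.
  have key : forall u, sq u = 1 -> c + eps <= qf M u.
    move=> u su; pose y := B *m u.
    have uy : u = Ni *m y by rewrite /y /Ni mulKmx.
    have h1 : 1 <= K1 * sq y.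
      rewrite -su uy -sqE trmx_mul -mulmxA mulmxA -/(qf _ _).
      rewrite mulmxA -[y^T *m Ni^T *m Ni]mulmxA.
      by have := Lq (Ni^T *m Ni) y; rewrite /qf -/K1 => /ler_normlP [_ h].
    have sy0 : 0 < sq y.
      rewrite lt_def sq_ge0 andbT; apply/eqP => h; move: h1; rewrite h mulr0.
      by rewrite ler10.
    have e2 : sq y = bl B u y.
      by rewrite /bl -sqE /y trmx_mul sB mulmxA.
    have h2 := psdCS y u sB pB; rewrite -e2 in h2.
    have h3 : qf B y <= K2 * sq y.
      by have := Lq B y; rewrite -/K2 => /ler_normlP [_ h].
    have h4 : sq y <= qf B u * K2.
      have := pB u => pu.
      have : sq y ^+ 2 <= (qf B u * K2) * sq y.
        apply: (le_trans h2); rewrite -mulrA; apply: ler_wpM2l => //.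
      by rewrite expr2 ler_pM2r.
    have h5 : 1 <= (1 + K1) * (1 + K2) * qf B u.
      have pu := pB u; nra.
    have : eps <= qf B u.
      rewrite /eps -(ler_pM2l (_ : 0 < (1 + K1) * (1 + K2))); last first.
        by rewrite mulr_gt0 // ltr_pwDl.
      by rewrite mulfV // gt_eqF // mulr_gt0 // ltr_pwDl.
    by rewrite /B qf_shift su mulr1 lerBrDl addrC.
  have : c + eps <= c.
    by apply: lb_le_inf => // _ [u [su ->]]; exact: key.
  by rewrite gerDl leNgt eps0.
have hlmin : lambda_min M <= c.
  have hlb : has_lbound [set a : R | eigenvalue M a].
    exists c => a /eigenvalueP [v vM v0].
    have u0 : v^T != 0 by rewrite trmx_eq0.
    have : qf M v^T = a * sq v^T.
      by rewrite /qf trmxK vM -scalemxAl mxZE -sqE trmxK.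
    have := hcq v^T => h1 h2; rewrite h2 in h1.
    by rewrite -(ler_pM2r (sq_gt0 u0)).
  by rewrite /lambda_min; apply: (ge_inf hlb); exact: hceig.
move=> u; apply: le_trans (hcq u); apply: ler_wpM2r => //; exact: sq_ge0.
Qed.

Lemma le_bigmax0 (I : finType) (F : I -> R) i : F i <= \big[Num.max/0]_i F i.
Proof. by rewrite (bigD1 i) //= le_max lexx. Qed.

Lemma bigmax_le0 (I : finType) (F : I -> R) c : 0 <= c -> (forall i, F i <= c) ->
  \big[Num.max/0]_i F i <= c.
Proof.
move=> c0 H; apply: (big_ind (fun x => x <= c)) => //.
by move=> x y hx hy; rewrite ge_max hx hy.
Qed.

Lemma maxnorm_entry m n (A : 'M[R]_(m, n)) i j : `|A i j| <= maxnorm A.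
Proof.
apply: le_trans (le_bigmax0 (fun i => \big[Num.max/0]_j `|A i j|) i).
exact: (le_bigmax0 (fun j => `|A i j|)).
Qed.

Lemma supnorm_entry d (v : 'rV[R]_d) j : `|v 0 j| <= supnorm_row v.
Proof. exact: (le_bigmax0 (fun j => `|v 0 j|)). Qed.

Lemma l1_split d (S : {set 'I_d}) (v : 'cV[R]_d) :
  l1norm v = l1norm_on S v + l1norm_on (~: S) v.
Proof.
rewrite /l1norm /l1norm_on (bigID (fun i => i \in S)) /=; congr (_ + _).
by apply: eq_bigl => i; rewrite finset.in_setC.
Qed.

Lemma l1_on_ge0 d (S : {set 'I_d}) (v : 'cV[R]_d) : 0 <= l1norm_on S v.
Proof. by apply: sumr_ge0. Qed.

Lemma l1_ge0 d (v : 'cV[R]_d) : 0 <= l1norm v.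
Proof. by apply: sumr_ge0. Qed.

Lemma rowbound d (x : 'cV[R]_d) (A : 'M[R]_d) j :
  `|(x^T *m A) 0 j| <= l1norm x * maxnorm A.
Proof.
rewrite mxE /l1norm mulr_suml; apply: (le_trans (ler_norm_sum _ _ _)).
apply: ler_sum => i _; rewrite mxE normrM; apply: ler_wpM2l => //.
exact: maxnorm_entry.
Qed.

Lemma qfBM d (A B : 'M[R]_d) u : qf (A - B) u = qf A u - qf B u.
Proof. by rewrite /qf mulmxBr mulmxBl mxBE. Qed.

Lemma qf_l1 d (D : 'M[R]_d) u t : maxnorm D <= t -> `|qf D u| <= t * l1norm u ^+ 2.
Proof.
move=> hD; rewrite qfE expr2 /l1norm mulr_suml mulr_sumr.
apply: (le_trans (ler_norm_sum _ _ _)); apply: ler_sum => j _.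
rewrite mulr_sumr mulr_sumr; apply: (le_trans (ler_norm_sum _ _ _)); apply: ler_sum => i _.
rewrite !normrM.
have := maxnorm_entry D i j => h1.
have h2 : `|D i j| <= t by exact: le_trans hD.
have -> : `|u i 0| * `|D i j| * `|u j 0| = `|D i j| * (`|u j 0| * `|u i 0|) by ring.
by apply: ler_wpM2r => //; exact: mulr_ge0.
Qed.

Lemma l2_le_sq d (S : {set 'I_d}) (u : 'cV[R]_d) : l2sq_on S u <= sq u.
Proof.
rewrite /sq (bigID (fun i => i \in S)) /= /l2sq_on lerDl.
by apply: sumr_ge0 => i _; exact: sqr_ge0.
Qed.

Definition REset {d} (M : 'M[R]_d) (s : nat) (xi : R) : set R :=
  [set r : R | exists (S : {set 'I_d}) (u : 'cV[R]_d),
        [/\ (#|S| <= s)%N, u != 0, l1norm_on (~: S) u <= xi * l1norm_on S u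
          & r = (u^T *m M *m u) 0 0 / l2sq_on S u]].

Lemma l2_pos d (S : {set 'I_d}) (u : 'cV[R]_d) xi : u != 0 ->
  l1norm_on (~: S) u <= xi * l1norm_on S u -> 0 < l2sq_on S u.
Proof.
move=> u0 hc; rewrite lt_def; apply/andP; split; last first.
  by apply: sumr_ge0 => i _; exact: sqr_ge0.
apply/eqP => h0.
have hS : forall i, i \in S -> u i 0 = 0.
  move=> i iS; have := (@psumr_eq0P _ _ (mem S) (fun i => u i 0 ^+ 2) (fun i _ => sqr_ge0 (u i 0)) h0 i iS).
  by move/eqP; rewrite sqrf_eq0 => /eqP.
have l1S : l1norm_on S u = 0 by apply: big1 => i iS; rewrite hS // normr0.
rewrite l1S mulr0 in hc.
have hc0 : l1norm_on (~: S) u = 0 by apply/eqP; rewrite eq_le hc l1_on_ge0.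
have hSc : forall i, i \in ~: S -> u i 0 = 0.
  move=> i iS; have := (@psumr_eq0P _ _ (mem (~: S)) (fun i => `|u i 0|) (fun i _ => normr_ge0 (u i 0)) hc0 i iS).
  by move/eqP; rewrite normr_eq0 => /eqP.
suff uz : u = 0 by move: u0; rewrite uz eqxx.
apply/matrixP => i j.
rewrite (ord1 j) mxE; case: (boolP (i \in S)) => iS; first exact: hS.
by apply: hSc; rewrite finset.in_setC.
Qed.

Lemma RE_lb d (M : 'M[R]_d) (s : nat) (xi lm : R) : 0 < lm ->
  (forall u, lm * sq u <= qf M u) -> lbound (REset M s xi) lm.
Proof.
move=> lm0 H _ [S [u [_ u0 hc ->]]].
have l2p := l2_pos u0 hc.
rewrite ler_pdivlMr // -/(qf M u); apply: le_trans (H u).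
by apply: ler_wpM2l; [exact: ltW | exact: l2_le_sq].
Qed.

Lemma RE_ge d (M : 'M[R]_d) (s : nat) (xi lm : R) : 0 < lm ->
  (forall u, lm * sq u <= qf M u) -> (0 <= RE M s xi) /\ (REset M s xi !=set0 -> lm <= RE M s xi /\ forall r, REset M s xi r -> RE M s xi <= r).
Proof.
move=> lm0 H; have lb := @RE_lb d M s xi lm lm0 H.
have hlb : has_lbound (REset M s xi) by exists lm.
have [E0|ne] := eqVneq (REset M s xi) set0.
  split; first by rewrite /RE -/(REset M s xi) E0 inf0.
  by move=> [x]; rewrite E0.
have ne' : REset M s xi !=set0 by apply/set0P.
have h1 : lm <= RE M s xi by apply: lb_le_inf.
split; first by apply: le_trans h1; exact: ltW.
move=> _; split => // r hr; exact: (ge_inf hlb).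
Qed.

Lemma DL d (Sig Sn : 'M[R]_d) (lam t kappa : R) (vh : 'cV[R]_d) :
  (0 < d)%N -> Sig^T = Sig -> 0 < lambda_min Sig -> 0 < kappa < 1 -> 0 <= t ->
  maxnorm (Sn - Sig) <= t ->
  4 * #|supp (vstar Sig)|%:R * t <= (1 - kappa) * lambda_min Sig ->
  l1norm (vstar Sig) * t <= lam ->
  ((exists v, feasible Sn lam v) -> is_minimizer Sn lam vh) ->
  l1norm (vh - vstar Sig)
    <= 8 * lam * #|supp (vstar Sig)|%:R / RE_kappa kappa Sig #|supp (vstar Sig)| 1
  /\ l1norm_on (~: supp (vstar Sig)) (vh - vstar Sig)
     <= l1norm_on (supp (vstar Sig)) (vh - vstar Sig).
Proof.
move=> d0 sS lm0 /andP[k0 k1] t0 hD hst hlam hmin.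
set lm := lambda_min Sig in lm0 hst *.
have PD : forall u, lm * sq u <= qf Sig u := lmin_bound d0 sS.
have uS : Sig \in unitmx.
  apply: contraT => nU.
  have : eigenvalue Sig 0.
    rewrite /eigenvalue /eigenspace (_ : 0%:M = 0); last first.
      by apply/matrixP => i j; rewrite !mxE mul0rn.
    by rewrite subr0 kermx_eq0 row_free_unit.
  move=> /eigenvalueP [v vM v0].
  have u0 : v^T != 0 by rewrite trmx_eq0.
  have h2 : qf Sig v^T = 0 by rewrite /qf trmxK vM scale0r mul0mx mxE.
  have h1 := PD v^T; rewrite h2 in h1.
  by have := mulr_gt0 lm0 (sq_gt0 u0); rewrite ltNge h1.
set vs := vstar Sig.
have vsS : vs^T *m Sig = e1 d.
  by rewrite /vs /vstar trmx_mul trmxK trmx_inv sS mulmxKV.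
set S := supp vs.
set s := #|S|.
set D := Sn - Sig.
have lam0 : 0 <= lam.
  by apply: le_trans hlam; apply: mulr_ge0 => //; exact: l1_ge0.
have feas_vs : feasible Sn lam vs.
  rewrite /feasible.
  have -> : vs^T *m Sn - e1 d = vs^T *m D by rewrite /D mulmxBr vsS.
  apply: bigmax_le0 => // j; apply: le_trans (rowbound vs D j) _.
  by apply: le_trans hlam; apply: ler_wpM2l => //; exact: l1_ge0.
have [feas_vh minv] := hmin (ex_intro _ vs feas_vs).
have l1le := minv vs feas_vs.
set h := vh - vs.
have vsSc : forall i, i \in ~: S -> vs i 0 = 0.
  by move=> i; rewrite finset.in_setC /S /supp inE negbK => /eqP.
have cone : l1norm_on (~: S) h <= l1norm_on S h.
  have e1' : l1norm_on (~: S) vh = l1norm_on (~: S) h.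
    by apply: eq_bigr => i iS; rewrite /h mxBE vsSc // subr0.
  have e2 : l1norm_on (~: S) vs = 0.
    by apply: big1 => i iS; rewrite vsSc // normr0.
  have e3 : l1norm_on S vs <= l1norm_on S vh + l1norm_on S h.
    rewrite /l1norm_on -big_split /=; apply: ler_sum => i _; rewrite /h mxBE.
    have := ler_normB (vh i 0) (vh i 0 - vs i 0).
    by rewrite opprB addrCA subrr addr0.
  have := l1_split S vh; have := l1_split S vs.
  rewrite e1' e2; lra.
split; last exact: cone.
have gb : forall j, `|(h^T *m Sn) 0 j| <= 2 * lam.
  move=> j.
  have -> : h^T *m Sn = (vh^T *m Sn - e1 d) - (vs^T *m Sn - e1 d).
    have -> : h^T = vh^T - vs^T by apply/matrixP => i k; rewrite !mxE.
    by rewrite mulmxBl opprB addrA subrK.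
  rewrite mxBE; apply: le_trans (ler_normB _ _) _.
  have := le_trans (supnorm_entry _ j) feas_vh.
  have := le_trans (supnorm_entry _ j) feas_vs.
  lra.
have qn : qf Sn h <= 2 * lam * l1norm h.
  rewrite /qf mxE /l1norm mulr_sumr; apply: ler_sum => j _.
  apply: le_trans (ler_norm _) _; rewrite normrM; apply: ler_wpM2r => //.
have qSE : qf Sig h = qf Sn h - qf D h.
  by rewrite /D qfBM; ring.
have qD : - qf D h <= t * l1norm h ^+ 2.
  by have := qf_l1 h hD => /ler_normlP [h1 _].
set a := l1norm_on S h.
set b := l2sq_on S h.
set l1h := l1norm h.
have l1h0 : 0 <= l1h by exact: l1_ge0.
have a0 : 0 <= a by exact: l1_on_ge0.
have l1a : l1h <= 2 * a.
  have := l1_split S h; rewrite -/l1h -/a => ->.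
  have -> : 2 * a = a + a by ring.
  by rewrite lerD2l.
have ab : a ^+ 2 <= s%:R * b.
  have ha : a = \sum_(i in S) `|h i 0| * 1 by apply: eq_bigr => i _; rewrite mulr1.
  have hb : b = \sum_(i in S) `|h i 0| ^+ 2.
    by apply: eq_bigr => i _; rewrite real_normK // num_real.
  have hs : \sum_(i in S) (1 : R) ^+ 2 = s%:R.
    by rewrite (eq_bigr (fun=> 1)) ?sumr_const // => i _; rewrite expr1n.
  have := CS (fun i => i \in S) (fun i => `|h i 0|) (fun=> 1).
  by rewrite -ha -hb hs mulrC.
have [REge0 REprops] := RE_ge s 1 lm0 PD.
rewrite /RE_kappa -/s.
have s0 : 0 <= s%:R :> R by [].
have [az|ap] := eqVneq a 0.
  have : l1h <= 0 by rewrite az mulr0 in l1a.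
  move=> h0; apply: le_trans h0 _.
  apply: divr_ge0; first by apply: mulr_ge0 => //; apply: mulr_ge0.
  by apply: mulr_ge0 => //; exact: ltW.
have apos : 0 < a by rewrite lt_def ap a0.
have h0 : h != 0.
  apply: contra ap => /eqP hz; apply/eqP; rewrite /a hz.
  by apply: big1 => i _; rewrite mxE normr0.
have cone1 : l1norm_on (~: S) h <= 1 * l1norm_on S h by rewrite mul1r.
have bpos : 0 < b := l2_pos h0 cone1.
have hset : REset Sig s 1 (qf Sig h / b).
  by exists S, h; split.
have [lmRE REle] := REprops (ex_intro _ _ hset).
have F1 : RE Sig s 1 * b <= qf Sig h.
  by rewrite -ler_pdivlMr //; exact: REle.
set r := RE Sig s 1 in REge0 lmRE F1 *.
have rpos : 0 < r by exact: lt_le_trans lm0 lmRE.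
have F2 : qf Sig h <= 2 * lam * l1h + t * l1h ^+ 2 by rewrite qSE; exact: lerD qn qD.
have F5 : 4 * s%:R * t <= (1 - kappa) * r.
  apply: le_trans hst _; apply: ler_wpM2l => //; lra.
have G0 : t * l1h ^+ 2 <= 4 * t * (s%:R * b).
  have : l1h ^+ 2 <= 4 * a ^+ 2 by nra.
  nra.
have G1 : kappa * r * b <= 4 * lam * a by nra.
have G2 : kappa * r * a ^+ 2 <= 4 * lam * a * s%:R.
  have kr : 0 <= kappa * r by apply: mulr_ge0; exact: ltW.
  nra.
have G3 : kappa * r * a <= 4 * lam * s%:R.
  have : a * (kappa * r * a) <= a * (4 * lam * s%:R) by nra.
  by rewrite ler_pM2l.
rewrite ler_pdivlMr; last by apply: mulr_gt0.
have kr : 0 <= kappa * r by apply: mulr_ge0; exact: ltW.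
apply: le_trans (ler_wpM2r kr l1a) _.
have -> : 2 * a * (kappa * r) = 2 * (kappa * r * a) by ring.
have -> : 8 * lam * s%:R = 2 * (4 * lam * s%:R) by ring.
by rewrite ler_pM2l.
Qed.

End LA.

Section Meas.
Context {R : realType} {dT : measure_display} {T : measurableType dT}.

Lemma measurable_bigmax (I : Type) (s : seq I) (F : I -> T -> R) :
  (forall i, measurable_fun setT (F i)) ->
  measurable_fun setT (fun w => \big[Num.max/0]_(i <- s) F i w).
Proof.
move=> mF; elim: s => [|i0 s IH].
  by under eq_fun do rewrite big_nil; exact: measurable_cst.
under eq_fun do rewrite big_cons.
exact: (measurable_realfun.measurable_maxr (mF i0) IH).
Qed.

End Meas.
Theorem lemma7 (R : realType) (dT : measure_display) (T : measurableType dT)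
  (P : probability T R) (d n : nat)
  (X : T -> 'cV[R]_d) (Xs : 'I_n -> T -> 'cV[R]_d)
  (cbar A kappa delta lam : R) (vhat : T -> 'cV[R]_d) :
  (0 < d)%N -> (0 < n)%N ->
  (forall j, measurable_fun setT (fun w => X w j 0)) ->
  iid_copies P Xs X ->
  (Kx P X < +oo)%E ->
  (forall a : R, 0 < a -> a * Num.sqrt (ln d%:R / n%:R) <= 1 ->
     (P [set w | (4 * a * fine (Kx P X) ^+ 2 * Num.sqrt (ln d%:R / n%:R)
                  < maxnorm (Sigma_n Xs w - Sigma_X P X))%R]
      <= (2 * powR d%:R (2 - cbar * a ^+ 2))%:E)%E) ->
  0 < A -> A * Num.sqrt (ln d%:R / n%:R) <= 1 ->
  0 < kappa < 1 ->
  0 < delta -> delta < lambda_min (Sigma_X P X) ->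
  #|supp (vstar (Sigma_X P X))|%:R * Num.sqrt (ln d%:R / n%:R)
    <= (1 - kappa) * lambda_min (Sigma_X P X)
       / ((1 + 1) ^+ 2 * (4 * A * fine (Kx P X) ^+ 2)) ->
  l1norm (vstar (Sigma_X P X)) * (4 * A * fine (Kx P X) ^+ 2)
    * Num.sqrt (ln d%:R / n%:R) <= lam ->
  (forall w, (exists v, feasible (Sigma_n Xs w) lam v) ->
     is_minimizer (Sigma_n Xs w) lam (vhat w)) ->
  exists E : set T, [/\ measurable E,
    ((1 - 2 * powR d%:R (2 - cbar * A ^+ 2))%:E <= P E)%E
  & forall w, E w ->
      l1norm (vhat w - vstar (Sigma_X P X))
        <= 8 * lam * #|supp (vstar (Sigma_X P X))|%:R
           / RE_kappa kappa (Sigma_X P X) #|supp (vstar (Sigma_X P X))| 1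
      /\ l1norm_on (~: supp (vstar (Sigma_X P X))) (vhat w - vstar (Sigma_X P X))
         <= l1norm_on (supp (vstar (Sigma_X P X))) (vhat w - vstar (Sigma_X P X))].

Proof.
move=> d0 n0 mX hiid hK hdev A0 hA /andP[k0 k1] dl0 dlm hs hlam hmin.
case: hiid => mXs _ _.
set Sig := Sigma_X P X in hdev dlm hs hlam hmin *.
set K := fine (Kx P X) in hdev hs hlam *.
set sq := Num.sqrt (ln d%:R / n%:R) in hdev hA hs hlam *.
set t := 4 * A * K ^+ 2 * sq.
have sq0 : 0 <= sq by exact: sqrtr_ge0.
have t0 : 0 <= t by apply: mulr_ge0 => //; apply: mulr_ge0; [apply: mulr_ge0 => //; exact: ltW | exact: sqr_ge0].
have sS : Sig^T = Sig.
  apply/matrixP => i j; rewrite !mxE; congr fine; congr (integral _ _ _).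
  by apply/funext => w; rewrite mulrC.
have lm0 : 0 < lambda_min Sig by exact: lt_trans dl0 dlm.
set sv := #|supp (vstar Sig)| in hs *.
have hst : 4 * sv%:R * t <= (1 - kappa) * lambda_min Sig.
  have c40 : 0 <= 4 * A * K ^+ 2.
    by apply: mulr_ge0; [apply: mulr_ge0 => //; exact: ltW | exact: sqr_ge0].
  have [c4z|c4p] := eqVneq (4 * A * K ^+ 2) 0.
    rewrite /t c4z mul0r mulr0; apply: mulr_ge0; last exact: ltW.
    by rewrite subr_ge0 ltW.
  have c4pos : 0 < 4 * A * K ^+ 2 by rewrite lt_def c4p c40.
  move: hs; rewrite ler_pdivlMr; last by apply: mulr_gt0.
  by have -> : 4 * sv%:R * t = sv%:R * sq * ((1 + 1) ^+ 2 * (4 * A * K ^+ 2)) by rewrite /t; ring.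
have hlam' : l1norm (vstar Sig) * t <= lam by rewrite /t mulrA.
pose f := fun w => maxnorm (Sigma_n Xs w - Sig).
have mf : measurable_fun setT f.
  rewrite /f /maxnorm.
  apply: measurable_bigmax => i; apply: measurable_bigmax => j.
  have -> : (fun w => `|(Sigma_n Xs w - Sig) i j|) =
    (fun w => `|n%:R^-1 * (\sum_(k <- index_enum 'I_n) (Xs k w i 0 * Xs k w j 0)) - Sig i j|).
    apply/funext => w; rewrite mxBE mxZE summxE; congr (`|_ * _ - _|).
    apply: eq_bigr => k _; rewrite mxE big_ord1 !mxE //.
  apply: measurableT_comp; first exact: measurable_realfun.normr_measurable.
  apply: measurable_realfun.measurable_funB; last exact: measurable_cst.
  apply: measurable_realfun.measurable_funM; first exact: measurable_cst.
  by apply: measurable_sum => k; apply: measurable_realfun.measurable_funM.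
pose Bad := [set w | t < f w].
have mBad : measurable Bad.
  have : measurable_fun setT (fun w => t < f w).
    by apply: measurable_realfun.measurable_fun_ltr => //; exact: measurable_cst.
  by move=> /(_ measurableT [set true]); rewrite setTI; apply.
have PBad := hdev A A0 hA.
exists (~` Bad); split.
- exact: measurableC.
- rewrite probability_setC //.
  have pB0 := measure_ge0 P Bad.
  have pB1 := probability_le1 P mBad.
  move: PBad pB0 pB1; rewrite -/t -/f -/Bad.
  case: (P Bad) => [r| |] h1 h2 h3.
  + rewrite lee_fin in h1; rewrite -EFinB lee_fin; apply: lerB => //.
  + by exfalso; move: h1; rewrite leNgt ltey.
  + by rewrite /= addey ?leey.
- move=> w Ew.
  have hD : maxnorm (Sigma_n Xs w - Sig) <= t by rewrite leNgt; apply/negP.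
  exact: DL d0 sS lm0 (introT andP (conj k0 k1)) t0 hD hst hlam' (hmin w).
Qed.
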